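(* For any connected component $\gamma$ of $V_{reg,\Delta}$, the elements $A_\gamma(\sigma)=[C(\sigma)'_\gamma]$, $\sigma\in{\cal B}(\Delta)$, satisfy the relations $$A_\gamma(\sigma)=\sum_{\beta\in\sigma,\ c_{\alpha\beta}\ne0}\operatorname{sign}(c_{\alpha\beta})\,A_\gamma(\sigma\cup\{\alpha\}\setminus\{\beta\})$$ in the quotient group ${\cal C}_\Delta/{\cal LC}_\Delta$. Here $\sigma\in{\cal B}(\Delta)$ and $\alpha\in\Delta\setminus\sigma$ are arbitrary, and $\alpha=\sum_{\beta\in\sigma}c_{\alpha\beta}\beta$.
   Context: Let $V$ be a real vector space of dimension $r$, and $\Delta\subset V\setminus\{0\}$ finite, spanning $V$, with $\Delta=-\Delta$. ${\cal B}(\Delta)$ is the set of subsets of $\Delta$ forming a basis of $V$. Walls are hyperplanes spanned by $r-1$ linearly independent elements of $\Delta$, and $V_{reg,\Delta}$ is the complement of their union. For $A\subset V$, $[A]$ is its characteristic function. A polyhedral cone is $C(h_1,\dots,h_n)=\{\sum t_ih_i:t_i\ge0\}$; $C(\emptyset)=\{0\}$, and $C^0$ denotes the relative interior of $C$. ${\cal C}(V)$ is the additive group of $\mathbb Z$-valued functions on $V$ generated by characteristic functions of polyhedral cones. ${\cal C}_\Delta$ is its subgroup generated by the $[C(\kappa)]$ with $\kappa\subset\Delta$, and ${\cal LC}_\Delta$ is the subgroup generated by those $[C(\kappa)]$, $\kappa\subset\Delta$, for which $C(\kappa)$ contains a line. For $\sigma\in{\cal B}(\Delta)$ and $p=\sum_{\alpha\in\sigma}p_\alpha\alpha\in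 V_{reg,\Delta}$ (so all $p_\alpha\ne0$), set $$C(\sigma)'_p=C(\{\alpha\in\sigma:p_\alpha>0\})+C(\{\alpha\in\sigma:p_\alpha<0\})^0=\Big\{\sum_{\alpha\in\sigma}t_\alpha\alpha:\ t_\alpha\ge0\text{ if }p_\alpha>0,\ t_\alpha>0\text{ if }p_\alpha<0\Big\}.$$ This depends only on the connected component $\gamma$ of $V_{reg,\Delta}$ containing $p$, and is denoted $C(\sigma)'_\gamma$; its characteristic function lies in ${\cal C}_\Delta$. *)

(* Defs.v *)
(* V = 'rV[R]_n, R : realType (the reals), n = r = dim V. *)
From HB Require Import structures.
From mathcomp Require Import all_boot all_order all_algebra.
From mathcomp Require Import boolp reals.
Set Implicit Arguments. Unset Strict Implicit. Unset Printing Implicit Defensive.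
Import Order.TTheory GRing.Theory Num.Theory.
Local Open Scope ring_scope.

Section Defs.
Variables (R : realType) (n : nat).
Local Notation V := 'rV[R]_n.

Definition cone (kappa : seq V) : V -> Prop := fun v =>
  exists t : 'I_(size kappa) -> R,
    (forall i, 0 <= t i) /\ v = \sum_(i < size kappa) t i *: kappa`_i.

Definition chi (A : V -> Prop) : V -> int := fun v => if asbool (A v) then 1 else 0.

Definition contains_line (A : V -> Prop) : Prop :=
  exists p d : V, d != 0 /\ forall s : R, A (p + s *: d).

Definition in_gen (P : seq V -> Prop) (f : V -> int) : Prop :=
  exists l : seq (int * seq V),
    (forall q, q \in l -> P q.2) /\
    forall v, f v = \sum_(q <- l) q.1 * chi (cone q.2) v.

Definition in_C (Delta : seq V) (f : V -> int) : Prop :=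
  in_gen (fun kappa => {subset kappa <= Delta}) f.
Definition in_LC (Delta : seq V) (f : V -> int) : Prop :=
  in_gen (fun kappa => {subset kappa <= Delta} /\ contains_line (cone kappa)) f.

Definition is_basis_in (Delta sigma : seq V) : Prop :=
  [/\ uniq sigma, {subset sigma <= Delta} & basis_of fullv sigma].

Definition Vreg (Delta : seq V) (p : V) : Prop :=
  forall w : seq V, {subset w <= Delta} -> size w = n.-1 -> free w ->
    p \notin <<w>>%VS.

Definition Cprime (sigma : seq V) (p : V) : V -> Prop := fun v =>
  exists c : 'I_(size sigma) -> R,
    p = \sum_(i < size sigma) c i *: sigma`_i /\
    exists t : 'I_(size sigma) -> R,
      v = \sum_(i < size sigma) t i *: sigma`_i /\
      forall i, (0 < c i -> 0 <= t i) /\ (c i < 0 -> 0 < t i).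

(* A_gamma(sigma) = [C(sigma)'_p] for p in gamma *)
Definition Agam (sigma : seq V) (p : V) : V -> int := chi (Cprime sigma p).

End Defs.

(* Main.v *)
Require Import Defs.
From HB Require Import structures.
From mathcomp Require Import all_boot all_order all_algebra.
From mathcomp Require Import boolp reals.
From mathcomp Require Import ring lra.
Set Implicit Arguments. Unset Strict Implicit. Unset Printing Implicit Defensive.
Import Order.TTheory GRing.Theory Num.Theory.
Local Open Scope ring_scope.



Section Part1.
Variables (R : realType) (n : nat).
Local Notation V := 'rV[R]_n.

Lemma chiT (A : V -> Prop) v : A v -> chi A v = 1.
Proof. by move=> h; rewrite /chi asboolT. Qed.
Lemma chiF (A : V -> Prop) v : ~ A v -> chi A v = 0.
Proof. by move=> h; rewrite /chi asboolF. Qed.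
Lemma chiE (A B : V -> Prop) v : (A v <-> B v) -> chi A v = chi B v.
Proof.
move=> [h1 h2]; rewrite /chi; case: asboolP => a; case: asboolP => b //.
- by case: b; apply: h1.
- by case: a; apply: h2.
Qed.

Lemma gen0 (P : seq V -> Prop) : in_gen P (fun _ => 0).
Proof. by exists [::]; split=> // v; rewrite big_nil. Qed.

Lemma gen_ext (P : seq V -> Prop) f g : in_gen P f -> (forall v, f v = g v) -> in_gen P g.
Proof. by move=> [l [h1 h2]] e; exists l; split=> // v; rewrite -e. Qed.

Lemma genD (P : seq V -> Prop) f g : in_gen P f -> in_gen P g ->
  in_gen P (fun v => f v + g v).
Proof.
move=> [l1 [h1 e1]] [l2 [h2 e2]]; exists (l1 ++ l2); split.
  by move=> q; rewrite mem_cat => /orP [] ?; [apply: h1|apply: h2].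
by move=> v; rewrite big_cat /= e1 e2.
Qed.

Lemma genZ (P : seq V -> Prop) (k : int) f : in_gen P f -> in_gen P (fun v => k * f v).
Proof.
move=> [l [h1 e1]]; exists [seq (k * q.1, q.2) | q <- l]; split.
  by move=> q /mapP [q' /h1 ? ->].
by move=> v; rewrite e1 big_map mulr_sumr; apply: eq_bigr => q _; rewrite mulrA.
Qed.

Lemma genB (P : seq V -> Prop) f g : in_gen P f -> in_gen P g ->
  in_gen P (fun v => f v - g v).
Proof.
move=> hf hg; apply: (gen_ext (genD hf (genZ (-1) hg))) => v.
by rewrite mulN1r.
Qed.

Lemma gen_sum (P : seq V -> Prop) (I : Type) (s : seq I) (Q : pred I) (F : I -> V -> int) :
  (forall i, Q i -> in_gen P (F i)) -> in_gen P (fun v => \sum_(i <- s | Q i) F i v).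
Proof.
move=> h; elim: s => [|a s IH].
  by apply: (gen_ext (gen0 P)) => v; rewrite big_nil.
case Qa: (Q a).
  by apply: (gen_ext (genD (h a Qa) IH)) => v; rewrite big_cons Qa.
by apply: (gen_ext IH) => v; rewrite big_cons Qa.
Qed.

Lemma gen_cone (P : seq V -> Prop) kappa : P kappa -> in_gen P (chi (cone kappa)).
Proof.
move=> h; exists [:: (1%:Z, kappa)]; split; first by move=> q; rewrite inE => /eqP ->.
by move=> v; rewrite big_seq1 mul1r.
Qed.

Inductive mode := MGe | MGt | MLe | MLt | MAl.
Definition mh (m : mode) (a : R) : Prop :=
  match m with MGe => 0 <= a | MGt => 0 < a | MLe => a <= 0 | MLt => a < 0 | MAl => True end.
Definition isopen (m : mode) : bool := match m with MGt | MLt => true | _ => false end.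
Definition opp (m : mode) : mode :=
  match m with MGe => MLt | MLt => MGe | MGt => MLe | MLe => MGt | MAl => MAl end.

Definition lin (b : seq V) (t : 'I_(size b) -> R) : V := \sum_(i < size b) t i *: b`_i.

Arguments lin : clear implicits.
Definition S (b : seq V) (md : 'I_(size b) -> mode) (v : V) : Prop :=
  exists t, v = lin b t /\ forall i, mh (md i) (t i).

Arguments S : clear implicits.
Lemma lin_uniq (b : seq V) t t' : free b -> lin b t = lin b t' -> forall i, t i = t' i.
Proof.
move=> fb e i.
have := (@freeP _ _ _ (in_tuple b)).
move=> /(_ fb) /(_ (fun i => t i - t' i)) h.
apply/eqP; rewrite -subr_eq0; apply/eqP; apply: h.
rewrite /=. under eq_bigr => j _ do rewrite scalerBl.
by rewrite sumrB -/(lin b t) e subrr.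
Qed.

Lemma S_iff (b : seq V) md v t : free b -> v = lin b t ->
  (S b md v <-> forall i, mh (md i) (t i)).
Proof.
move=> fb ->; split; last by move=> h; exists t.
by move=> [t' [e h]] i; rewrite (lin_uniq fb e); apply: h.
Qed.

Definition upd (m : nat) (md : 'I_m -> mode) (i : 'I_m) (x : mode) :=
  fun k => if k == i then x else md k.

Lemma upd_iff (m : nat) (md : 'I_m -> mode) i x (t : 'I_m -> R) :
  (forall k, mh (upd md i x k) (t k)) <->
  (mh x (t i) /\ forall k, k != i -> mh (md k) (t k)).
Proof.
rewrite /upd; split.
  move=> h; split; first by have := h i; rewrite eqxx.
  by move=> k /negbTE nk; have := h k; rewrite nk.
move=> [h1 h2] k; case: eqP => [->|/eqP nk] //; exact: h2.
Qed.

Lemma mode_sum (b : seq V) md i v : free b -> md i <> MAl ->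
  chi (S b md) v + chi (S b (upd md i (opp (md i)))) v = chi (S b (upd md i MAl)) v.
Proof.
move=> fb hi.
have mdE : md = upd md i (md i).
  by apply: funext => k; rewrite /upd; case: eqP => [->|].
case: (pselect (exists t, v = lin b t)) => [[t e]|ne]; last first.
  have nS md' : ~ S b md' v by move=> [t [e _]]; apply: ne; exists t.
  by rewrite !chiF // addr0.
rewrite /chi.
rewrite (asbool_equiv_eq (S_iff md fb e)).
rewrite (asbool_equiv_eq (S_iff _ fb e)).
rewrite (asbool_equiv_eq (S_iff (upd md i MAl) fb e)).
rewrite [in X in asbool X]mdE.
rewrite !(asbool_equiv_eq (upd_iff _ _ _ _)).
case: (pselect (forall k, k != i -> mh (md k) (t k))) => [A|nA]; last first.
  by rewrite !asboolF ?addr0 //; move=> [].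
have eA (P : Prop) : `[< P /\ forall k, k != i -> mh (md k) (t k) >] = `[< P >].
  by apply: asbool_equiv_eq; split => [[]|] //.
rewrite !eA (asboolT (I : mh MAl (t i))).
have hopp : mh (opp (md i)) (t i) <-> ~ mh (md i) (t i).
  case: (md i) hi => //= _; split.
  - by rewrite ltNge => /negP.
  - by move/negP; rewrite -ltNge.
  - by rewrite leNgt => /negP.
  - by move/negP; rewrite -leNgt.
  - by rewrite ltNge => /negP.
  - by move/negP; rewrite -ltNge.
  - by rewrite leNgt => /negP.
  - by move/negP; rewrite -leNgt.
rewrite (asbool_equiv_eq hopp).
case: (pselect (mh (md i) (t i))) => h.
  have h' : ~ ~ mh (md i) (t i) by [].
  by rewrite (asboolT h) (asboolF h') addr0.
by rewrite (asboolF h) (asboolT h) add0r.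
Qed.

Fixpoint coneR (L : seq V) (v : V) : Prop :=
  match L with [::] => v = 0 | x :: L' => exists s, 0 <= s /\ coneR L' (v - s *: x) end.

Lemma cone_coneR L v : cone L v <-> coneR L v.
Proof.
elim: L v => [|x L IH] v /=.
  rewrite /cone /=; split; first by move=> [t [_ ->]]; rewrite big_ord0.
  by move=> ->; exists (fun _ => 0); split => //; rewrite big_ord0.
rewrite /cone /=; split.
  move=> [t [t0 ->]]; exists (t ord0); split => //.
  rewrite big_ord_recl /= addrAC subrr add0r; apply/IH.
  exists (fun i => t (lift ord0 i)); split => // .
move=> [s [s0 /IH [t [t0 e]]]].
exists (fun i => if unlift ord0 i is Some j then t j else s); split.
  by move=> i; case: (unlift ord0 i).
rewrite big_ord_recl /= unlift_none.
have -> : \sum_(i < size L) (if unlift ord0 (lift ord0 i) is Some j then t j else s)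
   *: (x :: L)`_(lift ord0 i) = \sum_(i < size L) t i *: L`_i.
  by apply: eq_bigr => i _; rewrite liftK lift0.
by rewrite -e addrC subrK.
Qed.

Lemma coneR_cat L1 L2 v : coneR (L1 ++ L2) v <-> exists v1, coneR L1 v1 /\ coneR L2 (v - v1).
Proof.
elim: L1 v => [|x L1 IH] v /=.
  split; first by move=> h; exists 0; rewrite subr0.
  by move=> [v1 [-> h]]; rewrite subr0 in h.
split.
  move=> [s [s0 /IH [v1 [h1 h2]]]]; exists (s *: x + v1); split.
    by exists s; split => //; rewrite addrAC subrr add0r.
  by rewrite opprD addrA.
move=> [v1 [[s [s0 h1]] h2]]; exists s; split => //; apply/IH.
exists (v1 - s *: x); split => //.
by rewrite opprB addrA subrK.
Qed.

Definition isclosed m := ~~ isopen m.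

Definition g (m : mode) (x : V) : seq V :=
  match m with MGe => [:: x] | MLe => [:: - x] | MAl => [:: x; - x] | _ => [::] end.

Lemma coneR_g m x v : isclosed m -> (coneR (g m x) v <-> exists a, mh m a /\ v = a *: x).
Proof.
case: m => //= _.
- split; first by move=> [s [s0 /eqP]]; rewrite subr_eq0 => /eqP ->; exists s.
  by move=> [a [a0 ->]]; exists a; split => //; rewrite subrr.
- split; first by move=> [s [s0 /eqP]]; rewrite subr_eq0 => /eqP ->; exists (- s);
    rewrite scalerN scaleNr oppr_le0.
  by move=> [a [a0 ->]]; exists (- a); rewrite oppr_ge0 scaleNr scalerN opprK subrr.
- split.
    move=> [s1 [_ [s2 [_ /eqP]]]]; rewrite subr_eq0 subr_eq => /eqP ->.
    by exists (s1 - s2); split => //; rewrite scalerN scalerBl addrC.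
  move=> [a [_ ->]]; case: (lerP 0 a) => ha.
    by exists a; split => //; exists 0; rewrite scale0r subrr subr0.
  exists 0; split => //; exists (- a); rewrite oppr_ge0 (ltW ha); split => //.
  by rewrite scale0r subr0 scaleNr scalerN opprK subrr.
Qed.

Lemma coneR_flat (b : seq V) (md : 'I_(size b) -> mode) (s : seq 'I_(size b)) v :
  uniq s -> (forall k, isclosed (md k)) ->
  (coneR (flatten [seq g (md k) b`_k | k <- s]) v <->
   exists t : 'I_(size b) -> R, v = \sum_(k <- s) t k *: b`_k /\ forall k, k \in s -> mh (md k) (t k)).
Proof.
move=> + hc; elim: s v => [|k s IH] v /=.
  by move=> _; split; [move=> ->; exists (fun _ => 0); rewrite big_nil|
    move=> [t [-> _]]; rewrite big_nil].
move=> /andP [ks us]; rewrite coneR_cat; split.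
  move=> [v1 [/(coneR_g _ _ (hc k)) [a [ha ->]] /(IH _ us) [t [e ht]]]].
  exists (fun j => if j == k then a else t j); split.
    rewrite big_cons eqxx -[LHS](subrK (a *: b`_k)) e addrC; congr (_ + _).
    apply: eq_big_seq => j js; case: eqP => // ejk; by move: ks; rewrite -ejk js.
  move=> j; rewrite inE; case: eqP => [->|nj] //= js; exact: ht.
move=> [t [e ht]]; exists (t k *: b`_k); split.
  by apply/(coneR_g _ _ (hc k)); exists (t k); split => //; apply: ht; rewrite inE eqxx.
apply/(IH _ us); exists t; split; first by rewrite e big_cons addrAC subrr add0r.
by move=> j js; apply: ht; rewrite inE js orbT.
Qed.

Definition gen (b : seq V) (md : 'I_(size b) -> mode) : seq V :=
  flatten [seq g (md k) b`_k | k <- index_enum 'I_(size b)].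

Arguments gen : clear implicits.
Lemma cone_S (b : seq V) md v : (forall k, isclosed (md k)) -> (cone (gen b md) v <-> S b md v).
Proof.
move=> hc; rewrite cone_coneR /gen coneR_flat ?index_enum_uniq //; split.
  by move=> [t [e ht]]; exists t; split => // k; apply: ht; rewrite mem_index_enum.
by move=> [t [e ht]]; exists t; split => // k _; apply: ht.
Qed.


Lemma LC_All (Delta b : seq V) (md : 'I_(size b) -> mode) (i : 'I_(size b)) :
  free b -> {subset b <= Delta} -> (forall x, x \in Delta -> - x \in Delta) ->
  md i = MAl -> in_LC Delta (chi (S b md)).
Proof.
move=> fb bD sym.
move: {2}#|[set k | isopen (md k)]| (erefl #|[set k | isopen (md k)]|) => N.
elim: N md => [|N IH] md hN hi.
  have hc : forall k, isclosed (md k).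
    move=> k; apply/negP => ok; have : k \in [set k | isopen (md k)] by rewrite inE.
    by rewrite (card0_eq hN).
  apply: (gen_ext (gen_cone (kappa := gen b md) _)); last first.
    by move=> v; apply: chiE; apply: cone_S.
  split.
    move=> y /flattenP [l /mapP [k _ ->] yl].
    have bk : b`_k \in Delta by apply: bD; apply: mem_nth.
    case: (md k) (hc k) yl => //= _; rewrite !inE.
    - by move/eqP ->.
    - by move/eqP ->; apply: sym.
    - by case/orP => /eqP -> //; apply: sym.
  exists 0, b`_i; split; first by apply: (free_not0 fb); apply: mem_nth.
  move=> s; apply/cone_S => //; exists (fun k => if k == i then s else 0); split.
    rewrite add0r /lin (bigD1 i) //= eqxx big1 ?addr0 // => k /negbTE ->.
    by rewrite scale0r.
  move=> k; case: eqP => [->|_]; first by rewrite hi.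
  by move: (hc k); case: (md k) => //=.
have : [set k | isopen (md k)] != set0 by rewrite -card_gt0 hN.
case/set0Pn => k; rewrite inE => ok.
have nk : md k <> MAl by move=> e; rewrite e in ok.
have ki : k != i by apply/eqP => e; apply: nk; rewrite e.
have card' x : isclosed x -> #|[set j | isopen (upd md k x j)]| = N.
  move=> cx; have -> : [set j | isopen (upd md k x j)] = [set j | isopen (md j)] :\ k.
    apply/setP => j; rewrite !inE /upd; case: eqP => [->|/eqP] /=.
      by rewrite (negbTE cx).
    by [].
  by move: hN; rewrite (cardsD1 k) inE ok add1n => -[].
have hupd x : upd md k x i = MAl by rewrite /upd eq_sym (negbTE ki).
have cl : isclosed (opp (md k)) by case: (md k) ok.
apply: (gen_ext (genB (IH _ (card' MAl isT) (hupd _)) (IH _ (card' _ cl) (hupd _)))).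
by move=> v; rewrite -(mode_sum v fb nk) addrK.
Qed.

Definition flipm (m : nat) (md : 'I_m -> mode) (D : {set 'I_m}) :=
  fun i => if i \in D then opp (md i) else md i.

Lemma LC_flip (Delta b : seq V) (md : 'I_(size b) -> mode) (D : {set 'I_(size b)}) :
  free b -> {subset b <= Delta} -> (forall x, x \in Delta -> - x \in Delta) ->
  (forall i, i \in D -> md i <> MAl) ->
  in_LC Delta (fun v => chi (S b md) v - (-1) ^+ #|D| * chi (S b (flipm md D)) v).
Proof.
move=> fb bD sym.
move: {2}#|D| (erefl #|D|) => N.
elim: N D => [|N IH] D hN hD.
  have -> : flipm md D = md.
    by apply: funext => k; rewrite /flipm (card0_eq hN).
  by apply: (gen_ext (gen0 _)) => v; rewrite hN expr0 mul1r subrr.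
have : D != set0 by rewrite -card_gt0 hN.
case/set0Pn => k kD.
have hN' : #|D :\ k| = N by move: hN; rewrite (cardsD1 k) kD add1n => -[].
have hD' : forall i, i \in D :\ k -> md i <> MAl by move=> i; rewrite inE => /andP [_ /hD].
have e1 : flipm md (D :\ k) k = md k by rewrite /flipm !inE eqxx.
have e2 : flipm md D = upd (flipm md (D :\ k)) k (opp (flipm md (D :\ k) k)).
  apply: funext => j; rewrite /upd /flipm !inE; case: eqP => [->|_] /=.
    by rewrite kD eqxx.
  by [].
have nk : flipm md (D :\ k) k <> MAl by rewrite e1; apply: hD.
have hA : upd (flipm md (D :\ k)) k MAl k = MAl by rewrite /upd eqxx.
apply: (gen_ext (genD (IH _ hN' hD') (genZ ((-1) ^+ N) (LC_All fb bD sym hA)))).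
move=> v; rewrite -(mode_sum v fb nk) -e2 hN exprS hN'; ring.
Qed.
End Part1.
Arguments lin {R n} b t.
Arguments S {R n} b md v.
Arguments gen {R n} b md.



Section Part2.
Variables (R : realType) (n : nat).
Local Notation V := 'rV[R]_n.

Definition pol (q : R) : mode := if 0 < q then MGe else MGt.
Definition npol (q : R) : mode := if 0 < q then MLt else MLe.

Lemma Cprime_S (b : seq V) (q : 'I_(size b) -> R) p v :
  free b -> p = lin b q -> (forall i, q i != 0) ->
  (Cprime b p v <-> S b (fun i => pol (q i)) v).
Proof.
move=> fb ep hq; split.
  move=> [c' [ec [t [et ht]]]]; exists t; split => // i.
  have ci : c' i = q i by apply: (lin_uniq fb); rewrite /lin -ec.
  have := ht i; rewrite /pol ci; case: ifP => h [h1 h2] /=; first by apply: h1.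
  apply: h2; rewrite lt_neqAle (hq i) /= leNgt h //.
move=> [t [et ht]]; exists q; split => //; exists t; split => // i.
have := ht i; rewrite /pol; case: ifP => h /= hm; split => // hc.
all: try by move: (lt_trans h hc); rewrite ltxx.
all: try by move: h; rewrite hc.
all: try by apply: ltW.
Qed.

Lemma Vreg_nz (Delta b : seq V) p (q : 'I_(size b) -> R) :
  Vreg Delta p -> free b -> {subset b <= Delta} -> size b = n ->
  p = lin b q -> forall i, q i != 0.
Proof.
move=> hreg fb bD sz ep i; apply/negP => /eqP qi.
have ub := free_uniq fb.
have bi : b`_i \in b by apply: mem_nth.
set w := rem b`_i b.
have pw : p \in <<w>>%VS.
  rewrite ep /lin; apply: memv_suml => k _.
  case: (eqVneq k i) => [->|nki]; first by rewrite qi scale0r mem0v.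
  apply: memvZ; apply: memv_span; rewrite (mem_rem_uniq _ ub) inE /= mem_nth // andbT.
  by rewrite nth_uniq.
apply/negP: pw; apply: hreg.
- by move=> y /mem_rem /bD.
- by rewrite size_rem // sz.
- by move: fb; rewrite (perm_free (perm_to_rem bi)) free_cons => /andP [].
Qed.

Definition ev (A : R -> Prop) := exists d, 0 < d /\ forall e, 0 < e -> e < d -> A e.

Lemma ev_and A B : ev A -> ev B -> ev (fun e => A e /\ B e).
Proof.
move=> [d1 [d10 h1]] [d2 [d20 h2]]; exists (Order.min d1 d2); split.
  by rewrite lt_min d10 d20.
by move=> e e0; rewrite lt_min => /andP [e1 e2]; split; [apply: h1|apply: h2].
Qed.

Lemma ev_impl (A B : R -> Prop) : ev A -> (forall e, A e -> B e) -> ev B.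
Proof. by move=> [d [d0 h]] hab; exists d; split => // e e0 ed; apply/hab/h. Qed.

Lemma ev_true (A : R -> Prop) : (forall e, 0 < e -> A e) -> ev A.
Proof. by move=> h; exists 1; split => // e e0 _; apply: h. Qed.

Lemma ev_forall (I : finType) (A : I -> R -> Prop) :
  (forall i, ev (A i)) -> ev (fun e => forall i, A i e).
Proof.
move=> h.
suff : ev (fun e => forall i, i \in enum I -> A i e).
  by move=> H; apply: (ev_impl H) => e H' i; apply: H'; rewrite mem_enum.
elim: (enum I) => [|a s IH]; first by apply: ev_true.
apply: (ev_impl (ev_and (h a) IH)) => e [h1 h2] i; rewrite inE => /orP [/eqP ->|] //.
exact: h2.
Qed.

Lemma ev_wit A : ev A -> exists e, 0 < e /\ A e.
Proof.
move=> [d [d0 h]]; exists (d / 2); have d2 : 0 < d / 2 by rewrite divr_gt0.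
split => //; apply: h => //; lra.
Qed.

Lemma ev_contra A : ev A -> ev (fun e => ~ A e) -> False.
Proof. by move=> h1 h2; have [e [_ [h3 h4]]] := ev_wit (ev_and h1 h2). Qed.

Lemma ev_pos (a b : R) : 0 < a -> ev (fun e => 0 < a + e * b).
Proof.
move=> a0; have hb1 : 0 < `|b| + 1 by have := normr_ge0 b; lra.
exists (a / (`|b| + 1)); split; first by rewrite divr_gt0.
move=> e e0; rewrite ltr_pdivlMr // => ha.
have hb : 0 <= b + `|b| by have := ler_norm (- b); rewrite normrN => h; lra.
have := mulr_ge0 (ltW e0) hb; rewrite mulrDr => h.
move: ha; rewrite mulrDr mulr1 => ha.
lra.
Qed.

Definition stab (A : R -> Prop) := ev A \/ ev (fun e => ~ A e).

Lemma stab_aff (a b : R) : stab (fun e => 0 < a + e * b).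
Proof.
case: (ltrgtP 0 a) => ha.
- by left; apply: ev_pos.
- right; apply: (ev_impl (ev_pos (-b) (_ : 0 < - a))); first by rewrite oppr_gt0.
  move=> e h; lra.
- rewrite -ha; case: (ltrP 0 b) => hb.
    by left; apply: ev_true => e e0; rewrite add0r mulr_gt0.
  right; apply: ev_true => e e0; rewrite add0r; apply/negP; rewrite -leNgt.
  by rewrite mulr_ge0_le0 // ltW.
Qed.

Lemma ev_decide A : stab A -> ev (fun e => A e <-> ev A).
Proof.
case=> h.
  by apply: (ev_impl h) => e he; split.
apply: (ev_impl h) => e he; split => // h'; case: (ev_contra h' h).
Qed.

Lemma ev_nz (a b : R) : b != 0 -> ev (fun e => a + e * b != 0).
Proof.
move=> hb; case: (ltrgtP 0 a) => ha.
- by apply: (ev_impl (ev_pos b ha)) => e h; rewrite gt_eqF.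
- apply: (ev_impl (ev_pos (-b) (_ : 0 < - a))); first by rewrite oppr_gt0.
  by move=> e h; apply/eqP => h'; lra.
- by rewrite -ha; apply: ev_true => e e0; rewrite add0r mulf_neq0 // gt_eqF.
Qed.

Lemma ev_lex (a b : R) : ev (fun e => 0 < a + e * b) <-> (0 < a \/ (a = 0 /\ 0 < b)).
Proof.
split; last first.
  case=> [ha|[-> hb]]; first exact: ev_pos.
  by apply: ev_true => e e0; rewrite add0r mulr_gt0.
move=> h; case: (ltrgtP 0 a) => ha; first by left.
- exfalso; apply: (ev_contra h).
  apply: (ev_impl (ev_pos (-b) (_ : 0 < - a))); first by rewrite oppr_gt0.
  move=> e h' h''; lra.
- right; split => //; case: (ltrP 0 b) => // hb; exfalso; apply: (ev_contra h).
  apply: ev_true => e e0; rewrite -ha add0r; apply/negP; rewrite -leNgt.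
  by rewrite mulr_ge0_le0 // ltW.
Qed.

Lemma mh_pol q a : q != 0 -> (mh (pol q) a <-> ev (fun e => 0 < a + e * q)).
Proof.
move=> hq; rewrite ev_lex /pol; case: ifP => hq0 /=.
  rewrite le_eqVlt; split; first by case/orP => [/eqP <-|]; [right|left].
  by case=> [->|[-> _]]; rewrite ?orbT ?eqxx.
split; first by left.
case=> // [[_ h]]; by rewrite h in hq0.
Qed.

Lemma mh_npol q a : q != 0 -> (mh (npol q) a <-> ev (fun e => 0 < - a + e * - q)).
Proof.
move=> hq; rewrite ev_lex /npol !oppr_gt0; case: ifP => hq0 /=.
  split; first by left.
  by case=> // [[_ h]]; lra.
have hq' : q < 0 by rewrite lt_neqAle hq /= leNgt hq0.
split; last by case=> [h|[h _]]; lra.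
rewrite le_eqVlt => /orP [/eqP ->|]; last by left.
by right; split; rewrite ?oppr0.
Qed.

End Part2.



Section Comb.
Variables (R : realType) (m : nat) (c : 'I_m -> R).

Definition sgn0 (x : R) : R := if 0 < x then -1 else 1.
Definition G0 (X : 'I_m -> R) := forall i, 0 < sgn0 (c i) * X i.
Definition Gj (X : 'I_m -> R) (j : 'I_m) :=
  0 < X j / c j /\ forall i, i != j -> 0 < sgn0 (c i) * (X i - c i * (X j / c j)).
Definition PX (X : 'I_m -> R) := forall i, c i = 0 -> 0 < X i.

Lemma key (x a s : R) : a != 0 -> (0 < sgn0 a * (x - a * s) <-> x / a < s).
Proof.
move=> ha; rewrite /sgn0; case: ifP => h.
  rewrite ltr_pdivrMr //; split => H; nra.
have h' : a < 0 by rewrite lt_neqAle ha /= leNgt h.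
rewrite ltr_ndivrMr //; split => H; nra.
Qed.

Lemma G0E X : G0 X <-> PX X /\ forall i, c i != 0 -> X i / c i < 0.
Proof.
split.
  move=> h; split.
    by move=> i ci; have := h i; rewrite /sgn0 ci ltxx mul1r.
  move=> i ci; rewrite -(key (X i) 0 ci) mulr0 subr0; exact: h.
move=> [hP hn] i; case: (eqVneq (c i) 0) => ci.
  by rewrite /sgn0 ci ltxx mul1r; apply: hP.
by have := hn i ci; rewrite -(key (X i) 0 ci) mulr0 subr0.
Qed.

Lemma GjE X j : c j != 0 -> (Gj X j <-> PX X /\ 0 < X j / c j /\
  forall i, i != j -> c i != 0 -> X i / c i < X j / c j).
Proof.
move=> cj; split.
  move=> [h1 h2]; split; last split => //.
    move=> i ci; have ij : i != j by apply/eqP => e; move: cj; rewrite -e ci eqxx.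
    by have := h2 i ij; rewrite /sgn0 ci ltxx mul1r mul0r subr0.
  by move=> i ij ci; rewrite -key //; apply: h2.
move=> [hP [h1 h2]]; split => // i ij; case: (eqVneq (c i) 0) => ci.
  by rewrite /sgn0 ci ltxx mul1r mul0r subr0; apply: hP.
by rewrite key //; apply: h2.
Qed.

Lemma comb X : (forall j, c j != 0 -> X j != 0) ->
  (forall i j, i != j -> c i != 0 -> c j != 0 -> X i / c i != X j / c j) ->
  (if `[< G0 X >] then 1 else 0) + \sum_(j < m | c j != 0) (if `[< Gj X j >] then 1 else 0)
  = (if `[< PX X >] then 1 else 0 : int).
Proof.
move=> hX hd.
case: (pselect (PX X)) => hP; last first.
  rewrite !asboolF //; last by case/G0E.
  rewrite add0r big1 // => j cj; rewrite asboolF //; by case/(GjE X cj).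
rewrite (asboolT hP).
case: (pselect (forall i, c i != 0 -> X i / c i < 0)) => hneg.
  rewrite asboolT; last by apply/G0E.
  rewrite big1 ?addr0 // => j cj; rewrite asboolF //.
  case/(GjE X cj) => _ [h _]; have := hneg j cj; lra.
have [i0 [ci0 si0]] : exists i0, c i0 != 0 /\ 0 < X i0 / c i0.
  apply: contrapT => H; apply: hneg => i ci; rewrite lt_neqAle mulf_eq0 invr_eq0 negb_or (hX i ci) ci /=.
  rewrite leNgt; apply/negP => h; apply: H; by exists i.
rewrite asboolF; last by case/G0E => _ h; have := h i0 ci0; lra.
rewrite add0r.
case: (@arg_maxP _ _ _ i0 (fun i => c i != 0) (fun i => X i / c i) ci0) => jm cjm hmax.
have {}hmax : forall j, c j != 0 -> X j / c j <= X jm / c jm by [].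
rewrite (bigD1 jm) //= asboolT; last first.
  apply/(GjE X cjm); split => //; split; first by have := hmax i0 ci0; lra.
  move=> i ij ci; rewrite lt_neqAle hd // hmax //.
rewrite big1 ?addr0 // => j /andP [cj jjm]; rewrite asboolF //.
case/(GjE X cj) => _ [_ h]; have := h jm; rewrite eq_sym jjm cjm => /(_ isT isT).
have := hmax j cj; lra.
Qed.

End Comb.



Section Main.
Variables (R : realType) (n : nat) (Delta : seq 'rV[R]_n).
Hypothesis Delta_nz : 0 \notin Delta.
Hypothesis Delta_sym : forall x, x \in Delta -> - x \in Delta.
Variable p : 'rV[R]_n.
Hypothesis p_reg : Vreg Delta p.
Variable sigma : seq 'rV[R]_n.
Hypothesis sigma_B : is_basis_in Delta sigma.
Variable alpha : 'rV[R]_n.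
Hypothesis alpha_D : alpha \in Delta.
Variable c : 'I_(size sigma) -> R.
Hypothesis c_def : alpha = \sum_(i < size sigma) c i *: sigma`_i.

Local Notation V := 'rV[R]_n.
Local Notation m := (size sigma).

Lemma hbasis : basis_of fullv sigma. Proof. by case: sigma_B. Qed.
Lemma fs : free sigma. Proof. exact: basis_free hbasis. Qed.
Lemma hsD : {subset sigma <= Delta}. Proof. by case: sigma_B. Qed.
Lemma sz : m = n.
Proof.
have := size_basis (X := in_tuple sigma) hbasis; rewrite dimvf /dim /= mul1n => <-.
by [].
Qed.

Definition natf (t : 'I_m -> R) (k : nat) : R := oapp t 0 (insub k).
Lemma natfE t (i : 'I_m) : natf t i = t i.
Proof. by rewrite /natf valK. Qed.

Definition bj (j : 'I_m) := set_nth 0 sigma j alpha.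
Lemma size_bj j : size (bj j) = m.
Proof. by rewrite size_set_nth; apply/maxn_idPr; exact: ltn_ord j. Qed.
Lemma nth_bj j (k : nat) : (bj j)`_k = if k == j then alpha else sigma`_k.
Proof. by rewrite nth_set_nth. Qed.

Definition YN (j : 'I_m) (X : 'I_m -> R) (k : nat) : R :=
  if k == j then X j / c j else natf X k - natf c k * (X j / c j).

Lemma lin_bj j (Y : nat -> R) : lin (bj j) (fun k => Y (val k)) =
  lin sigma (fun i => (if i == j then 0 else Y i) + Y j * c i).
Proof.
rewrite /lin -(big_mkord xpredT (fun k => Y k *: (bj j)`_k)) size_bj big_mkord.
under eq_bigr => i _ do rewrite nth_bj.
rewrite (bigD1 j) //= eqxx.
under [RHS]eq_bigr => i _ do rewrite scalerDl.
rewrite big_split /= [X in _ = _ + X](eq_bigr (fun i => Y j *: (c i *: sigma`_i))); last first.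
  by move=> i _; rewrite scalerA.
rewrite -scaler_sumr -c_def [X in _ = X + _](bigD1 j) //= eqxx scale0r add0r addrC.
congr (_ + _); apply: eq_bigr => i ij.
have h1 : (i == j) = false := negbTE ij.
have h2 : (nat_of_ord i == nat_of_ord j) = false := h1.
by rewrite h1 h2.
Qed.


Lemma lin0 (b : seq V) : lin b (fun _ => 0) = 0.
Proof. by rewrite /lin big1 // => i _; rewrite scale0r. Qed.

Lemma free_bj j : c j != 0 -> free (bj j).
Proof.
move=> cj; apply/(@freeP _ _ _ (in_tuple (bj j))) => t ht i.
set Y := fun k => oapp t 0 (insub k).
have tE : t = fun k => Y (val k) by apply: funext => k; rewrite /Y valK.
have hl : lin (bj j) t = 0 by [].
rewrite tE lin_bj -(lin0 sigma) in hl.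
have hu := lin_uniq fs hl.
have Yj : Y j = 0.
  by have := hu j; rewrite eqxx add0r => /eqP; rewrite mulf_eq0 (negbTE cj) orbF => /eqP.
have im : (i < m)%N by rewrite -(size_bj j).
rewrite tE /=; have := hu (Ordinal im).
case: eqP => [e|ne]; first by move=> _; have -> : val i = val j by move: e => /(congr1 val).
by rewrite Yj mul0r addr0.
Qed.

Lemma bj_sub j : {subset bj j <= Delta}.
Proof.
move=> y /(nthP 0) [k hk <-]; rewrite nth_bj; case: eqP => _ //.
by apply: hsD; apply: mem_nth; rewrite -(size_bj j).
Qed.

Definition xc (v : V) : 'I_m -> R := fun i => coord (in_tuple sigma) i v.
Lemma xcE v : v = lin sigma (xc v).
Proof. by apply: coord_span; rewrite (span_basis hbasis) memvf. Qed.

Lemma YN_coord j v : c j != 0 -> v = lin (bj j) (fun k => YN j (xc v) (val k)).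
Proof.
move=> cj; rewrite lin_bj {1}(xcE v); apply: eq_bigr => i _; congr (_ *: _).
rewrite /YN eqxx; case: eqP => [->|ne].
  by rewrite add0r divfK.
have -> : (nat_of_ord i == nat_of_ord j) = false by apply/eqP => e; apply: ne; apply: val_inj.
by rewrite !natfE; field.
Qed.

Definition pi := xc p.
Lemma pi_nz i : pi i != 0.
Proof. exact: (Vreg_nz p_reg fs hsD sz (xcE p)). Qed.

Definition qj j (k : 'I_(size (bj j))) := YN j pi (val k).
Lemma qj_nz j (k : 'I_(size (bj j))) : c j != 0 -> @qj j k != 0.
Proof.
move=> cj; apply: (Vreg_nz p_reg (free_bj cj) (@bj_sub j) _ (YN_coord p cj)).
by rewrite size_bj sz.
Qed.

Definition F0 := [set i : 'I_m | 0 < c i].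
Definition Fj j := [set k : 'I_(size (bj j)) | (val k != val j) && (0 < natf c (val k))].
Definition md0 := flipm (fun i => pol (pi i)) F0.
Definition mdj j := flipm (fun k => pol (@qj j k)) (Fj j).
Arguments Fj : clear implicits.
Arguments mdj : clear implicits.
Arguments qj : clear implicits.
Definition mdA (i : 'I_m) := if c i != 0 then MAl else pol (pi i).

Lemma pol_nA (q : R) : pol q <> MAl. Proof. by rewrite /pol; case: ifP. Qed.

Lemma L0 : in_LC Delta (fun v => Agam sigma p v - (-1) ^+ #|F0| * chi (S sigma md0) v).
Proof.
have H := @LC_flip _ _ Delta sigma (fun i => pol (pi i)) F0 fs hsD Delta_sym
  (fun i _ => @pol_nA (pi i)).

apply: (gen_ext H) => v.
congr (_ - _); rewrite /Agam; apply: chiE; split.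
  by move/(Cprime_S v fs (xcE p) pi_nz).
by move=> h; apply/(Cprime_S v fs (xcE p) pi_nz).
Qed.

Lemma Lj j : c j != 0 ->
  in_LC Delta (fun v => Agam (bj j) p v - (-1) ^+ #|Fj j| * chi (S (bj j) (mdj j)) v).
Proof.
move=> cj.
have H := (@LC_flip _ _ Delta (bj j) (fun k => pol (@qj j k)) (Fj j) (free_bj cj)
  (@bj_sub j) Delta_sym (fun i _ => @pol_nA _)).
apply: (gen_ext H) => v.
congr (_ - _); rewrite /Agam; apply: chiE; split.
  by move/(Cprime_S v (free_bj cj) (YN_coord p cj) (fun k => qj_nz k cj)).
by move=> h; apply/(Cprime_S v (free_bj cj) (YN_coord p cj) (fun k => qj_nz k cj)).
Qed.

Lemma LA : in_LC Delta (chi (S sigma mdA)).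
Proof.
have [i0 ci0] : exists i, c i != 0.
  apply: contrapT => H; move: Delta_nz; rewrite -(_ : alpha = 0) ?alpha_D //.
  rewrite c_def big1 // => i _.
  have -> : c i = 0 by apply/eqP; apply: contrapT => h; apply: H; exists i; apply/negP.
  by rewrite scale0r.
by apply: (@LC_All _ _ Delta sigma mdA i0 fs hsD Delta_sym); rewrite /mdA ci0.
Qed.

Lemma SI j : c j != 0 -> sgz (c j) * (-1) ^+ #|Fj j| = - (-1) ^+ #|F0| :> int.
Proof.
move=> cj.
have e : #|Fj j| = #|F0 :\ j|.
  have -> : Fj j = cast_ord (size_bj j) @^-1: (F0 :\ j).
    apply/setP => k; rewrite !inE.
    have -> : natf c (val k) = c (cast_ord (size_bj j) k).
      by rewrite -natfE.
    by [].
  apply: on_card_preimset; apply: onW_bij.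
  exact: (Bijective (cast_ordK _) (cast_ordKV _)).
rewrite e (cardsD1 j F0) inE.
case: (ltrgtP 0 (c j)) => h.
- by rewrite gtr0_sgz // /= exprS mul1r mulN1r opprK.
- by rewrite ltr0_sgz // add0n mulN1r.
- by move: cj; rewrite -h eqxx.
Qed.

Lemma ev_ext (A B : R -> Prop) : (forall e, A e <-> B e) -> (ev A <-> ev B).
Proof. by move=> h; split => H; apply: (ev_impl H) => e /h. Qed.

Lemma stab_ext (A B : R -> Prop) : (forall e, A e <-> B e) -> stab A -> stab B.
Proof.
move=> h [H|H]; [left|right]; apply: (ev_impl H) => e //; first by move/h.
by move=> nA /h.
Qed.

Lemma forall_iff (I : Type) (A B : I -> Prop) : (forall i, A i <-> B i) ->
  ((forall i, A i) <-> (forall i, B i)).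
Proof. by move=> h; split => H i; apply/h. Qed.

Lemma mh_flip (q a : R) (B : bool) : q != 0 ->
  (mh (if B then npol q else pol q) a <-> ev (fun e => 0 < (if B then -1 else 1) * (a + e * q))).
Proof.
move=> hq; case: B.
  rewrite mh_npol //; apply: ev_ext => e; have -> : -1 * (a + e * q) = - a + e * - q by ring.
  by [].
rewrite mh_pol //; apply: ev_ext => e; by rewrite mul1r.
Qed.

Lemma flipm_pol (k : nat) (q : 'I_k -> R) D i :
  flipm (fun i => pol (q i)) D i = if i \in D then npol (q i) else pol (q i).
Proof. by rewrite /flipm /pol /npol; case: (i \in D) => //; case: ifP. Qed.

Lemma natf_lin (x y : 'I_m -> R) e k : natf (fun i => x i + e * y i) k = natf x k + e * natf y k.
Proof. by rewrite /natf; case: insub => //=; rewrite mulr0 addr0. Qed.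

Lemma YN_lin j (x y : 'I_m -> R) e k :
  YN j (fun i => x i + e * y i) k = YN j x k + e * YN j y k.
Proof. rewrite /YN !natf_lin; case: ifP => _; ring. Qed.

Definition sj (j i : 'I_m) : R := if (i != j) && (0 < c i) then -1 else 1.

Lemma GjE' (X : 'I_m -> R) j : c j != 0 ->
  ((forall i : 'I_m, 0 < sj j i * YN j X i) <-> Gj c X j).
Proof.
move=> cj; split.
  move=> h; split.
    by have := h j; rewrite /sj eqxx /= /YN eqxx mul1r.
  move=> i ij; have := h i; rewrite /sj ij /= /YN.
  have -> : (nat_of_ord i == nat_of_ord j) = false by apply/negbTE.
  by rewrite !natfE.
move=> [h1 h2] i; case: (eqVneq i j) => [->|ij].
  by rewrite /sj eqxx /= /YN eqxx mul1r.
rewrite /sj ij /= /YN.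
have -> : (nat_of_ord i == nat_of_ord j) = false by apply/negbTE.
by rewrite !natfE; apply: h2.
Qed.

Lemma all_bj j (Q : nat -> Prop) :
  (forall k : 'I_(size (bj j)), Q (val k)) <-> (forall i : 'I_m, Q (val i)).
Proof.
split => h i.
  have im : (i < size (bj j))%N by rewrite size_bj.
  exact: (h (Ordinal im)).
have im : (i < m)%N by rewrite -(size_bj j).
exact: (h (Ordinal im)).
Qed.

Section Point.
Variable v : V.
Let x := xc v.
Let X e := fun i => x i + e * pi i.

Lemma T0E : S sigma md0 v <-> forall i, ev (fun e => 0 < sgn0 (c i) * X e i).
Proof.
rewrite (S_iff md0 fs (xcE v)); apply: forall_iff => i.
rewrite /md0 flipm_pol mh_flip ?pi_nz //; apply: ev_ext => e.
by rewrite /sgn0 inE.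
Qed.

Lemma TjE j : c j != 0 -> (S (bj j) (mdj j) v <->
  forall i : 'I_m, ev (fun e => 0 < sj j i * YN j (X e) i)).
Proof.
move=> cj; rewrite (S_iff (mdj j) (free_bj cj) (YN_coord v cj)).
set Q := fun k : nat => ev (fun e => 0 < (if (k != j) && (0 < natf c k) then -1 else 1)
   * YN j (X e) k).
apply: (iff_trans _ (iff_trans (all_bj j Q) _)).
- apply: forall_iff => k.
  rewrite /mdj flipm_pol mh_flip ?qj_nz // /Q; apply: ev_ext => e.
  by rewrite /X YN_lin inE.
- apply: forall_iff => i; rewrite /Q natfE; apply: ev_ext => e.
  by rewrite /sj.
Qed.

Lemma TAE : S sigma mdA v <-> forall i, c i = 0 -> ev (fun e => 0 < X e i).
Proof.
rewrite (S_iff mdA fs (xcE v)); apply: forall_iff => i.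
rewrite /mdA; case: eqP => [ci|nci] /=.
  by rewrite mh_pol ?pi_nz //; split => [h _|h]; [apply: h|apply: h].
by split => // _ h; case: nci.
Qed.

Lemma PI : chi (S sigma md0) v + \sum_(j < m | c j != 0) chi (S (bj j) (mdj j)) v
  = chi (S sigma mdA) v.
Proof.
have h1 : ev (fun e => forall i, (0 < sgn0 (c i) * X e i <-> ev (fun e => 0 < sgn0 (c i) * X e i))).
  apply: ev_forall => i; apply: ev_decide.
  apply: (stab_ext _ (stab_aff (sgn0 (c i) * x i) (sgn0 (c i) * pi i))) => e.
  by rewrite /X; have -> : sgn0 (c i) * (x i + e * pi i) = sgn0 (c i) * x i + e * (sgn0 (c i) * pi i)
    by ring.
have h2 : ev (fun e => forall j, c j != 0 -> forall i : 'I_m,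
   (0 < sj j i * YN j (X e) i <-> ev (fun e => 0 < sj j i * YN j (X e) i))).
  apply: ev_forall => j; case: (eqVneq (c j) 0) => cj; first by apply: ev_true => e _ /=.
  apply: (@ev_impl _ (fun e => forall i : 'I_m,
     (0 < sj j i * YN j (X e) i <-> ev (fun e => 0 < sj j i * YN j (X e) i)))); last by move=> e h _.
  apply: ev_forall => i; apply: ev_decide.
  apply: (stab_ext _ (stab_aff (sj j i * YN j x i) (sj j i * YN j pi i))) => e.
  by rewrite /X YN_lin; have -> : sj j i * (YN j x i + e * YN j pi i) =
     sj j i * YN j x i + e * (sj j i * YN j pi i) by ring.
have h3 : ev (fun e => forall i, (0 < X e i <-> ev (fun e => 0 < X e i))).
  by apply: ev_forall => i; apply: ev_decide; apply: stab_aff.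
have h4 : ev (fun e => forall j, c j != 0 -> X e j != 0).
  apply: ev_forall => j; apply: (ev_impl (ev_nz (x j) (pi_nz j))) => e h _; exact: h.
have h5 : ev (fun e => forall i j, i != j -> c i != 0 -> c j != 0 -> X e i / c i != X e j / c j).
  apply: ev_forall => i; apply: ev_forall => j.
  case: (boolP ((i != j) && (c i != 0) && (c j != 0))); last first.
    by move=> H; apply: ev_true => e _ ij ci cj; move: H; rewrite ij ci cj.
  case/andP => /andP [ij ci] cj.
  have hb : pi i / c i - pi j / c j != 0.
    have im : (i < size (bj j))%N by rewrite size_bj.
    have := qj_nz (Ordinal im) cj; rewrite /qj /YN /=.
    have -> : (nat_of_ord i == nat_of_ord j) = false by apply/negbTE.
    rewrite !natfE; apply: contra => /eqP h; apply/eqP.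
    have -> : pi i - c i * (pi j / c j) = c i * (pi i / c i - pi j / c j) by field; rewrite ?ci ?cj.
    by rewrite h mulr0.
  apply: (ev_impl (ev_nz (x i / c i - x j / c j) hb)) => e h _ _ _.
  rewrite -subr_eq0; apply: contra h => /eqP h; apply/eqP; rewrite -h /X; field.
  by rewrite ci cj.
have [e0 [_ [[[[H1 H2] H3] H4] H5]]] := ev_wit (ev_and (ev_and (ev_and (ev_and h1 h2) h3) h4) h5).
have E0 : chi (S sigma md0) v = if `[< G0 c (X e0) >] then 1 else 0.
  rewrite /chi; congr (if _ then _ else _); apply: asbool_equiv_eq.
  rewrite T0E; apply: forall_iff => i; by rewrite H1.
have Ej : forall j, c j != 0 -> chi (S (bj j) (mdj j)) v = if `[< Gj c (X e0) j >] then 1 else 0.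
  move=> j cj; rewrite /chi; congr (if _ then _ else _); apply: asbool_equiv_eq.
  rewrite (TjE cj) -(GjE' _ cj); apply: forall_iff => i; by rewrite H2.
have EA : chi (S sigma mdA) v = if `[< PX c (X e0) >] then 1 else 0.
  rewrite /chi; congr (if _ then _ else _); apply: asbool_equiv_eq.
  rewrite TAE; apply: forall_iff => i; split => h ci; [by rewrite H3; apply: h | by rewrite -H3; apply: h].
rewrite E0 (eq_bigr _ Ej) EA; exact: comb.
Qed.

End Point.

Lemma main_sec : in_LC Delta (fun v => Agam sigma p v
    - \sum_(i < m | c i != 0) sgz (c i) * Agam (set_nth 0 sigma i alpha) p v).
Proof.
set E0 := (-1) ^+ #|F0| : int.
have H := genD (genB L0 (gen_sum (I := 'I_m) (Q := fun j => c j != 0) (index_enum 'I_m)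
  (fun j cj => genZ (sgz (c j)) (Lj cj)))) (genZ E0 LA).
apply: (gen_ext H) => v /=.
rewrite -(PI v) mulrDr mulr_sumr.
have -> : \sum_(j <- index_enum 'I_m | c j != 0)
     sgz (c j) * (Agam (bj j) p v - (-1) ^+ #|Fj j| * chi (S (bj j) (mdj j)) v)
   = \sum_(j < m | c j != 0) sgz (c j) * Agam (set_nth 0 sigma j alpha) p v
     + \sum_(j < m | c j != 0) E0 * chi (S (bj j) (mdj j)) v.
  rewrite -big_split; apply: eq_bigr => j cj /=.
  by rewrite mulrBr mulrA (SI cj) /E0 mulNr opprK.
rewrite /E0; ring.
Qed.
End Main.

Theorem mainTheorem17 (R : realType) (n : nat) (Delta : seq 'rV[R]_n)
  (Delta_nz : 0 \notin Delta)
  (Delta_span : (<<Delta>>%VS = fullv))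
  (Delta_sym : forall x, x \in Delta -> - x \in Delta)
  (p : 'rV[R]_n) (p_reg : Vreg Delta p)
  (sigma : seq 'rV[R]_n) (sigma_B : is_basis_in Delta sigma)
  (alpha : 'rV[R]_n) (alpha_D : alpha \in Delta) (alpha_ns : alpha \notin sigma)
  (c : 'I_(size sigma) -> R)
  (c_def : alpha = \sum_(i < size sigma) c i *: sigma`_i) :
  in_LC Delta (fun v =>
    Agam sigma p v
    - \sum_(i < size sigma | c i != 0)
        sgz (c i) * Agam (set_nth 0 sigma i alpha) p v).
Proof.
exact: (main_sec Delta_nz Delta_sym p_reg sigma_B alpha_D c_def).
Qed.
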